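(* Let $\mathbf t=(\bar t_v)_{v\in\mathcal V}\in(\mathbb C^* )^{\mathcal V}$, write $\bar t_{ij}=\bar t_{v_{ij}}$, and define $b(\mathbf t)\in GL_{n+1}(\mathbb C)$ by $$b(\mathbf t)=x_{\mathbf c}\big((\bar t_{h_a}\bar t_{t_a}^{-1})_{a\in\mathcal A}\big)\,\mathrm{diag}(\bar t_{11},\bar t_{22},\dots,\bar t_{n+1,n+1})\,\dot w_0^{-1}\,x_{\mathbf d}\big((-\bar t_{h_a}\bar t_{t_a}^{-1})_{a\in\mathcal A}\big)^{-1}.$$ Then for $k=1,\dots,n$, in $V(\omega_k)=\bigwedge^k\mathbb C^{n+1}$ with highest weight vector $v^+_{\omega_k}=v_1\wedge\dots\wedge v_k$, $$\langle b(\mathbf t)\cdot v^+_{\omega_k},v^+_{\omega_k}\rangle=\Big(\prod_{i=1}^{n+1}\bar t_{ii}\Big)\Big(\prod_{i-j=k}\bar t_{ij}^{-1}\Big).$$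
   Context: $v_1,\dots,v_{n+1}$ is the standard basis of $\mathbb C^{n+1}$; $\langle w,v^+_{\omega_k}\rangle$ denotes the coefficient of $v_1\wedge\dots\wedge v_k$ in $w\in\bigwedge^k\mathbb C^{n+1}$ with respect to the basis of wedges of standard basis vectors. Matrices: $E_{ij}$ elementary matrices, $x_i(s)=\mathbf 1+sE_{i,i+1}$, $\dot s_i=x_i(1)(\mathbf 1-E_{i+1,i})x_i(1)\in SL_{n+1}$, $\dot w_0$ the product of the $\dot s_i$ along a reduced expression of the longest element of $S_{n+1}$. Quiver: vertices $v_{ij}$, $1\le j\le i\le n+1$ (set $\mathcal V$); arrows $c_{ij}$ from $v_{i+1,j}$ to $v_{ij}$ ($1\le j\le i\le n$) and $d_{ij}$ from $v_{ij}$ to $v_{i,j-1}$ ($2\le j\le i\le n+1$), set $\mathcal A$, with $h_a,t_a$ head and tail. For $\sigma\in(\mathbb C^* )^{\mathcal A}$ (or with entries in $\mathbb C$): $x_{\mathbf c}(\sigma)=\prod_{k=1}^{n}\big(\prod_{j=n}^{k}x_j(\sigma_{c_{j,k}})\big)$ (ordered product, $k$ increasing, $j$ decreasing from $n$ to $k$) and $x_{\mathbf d}(\sigma)=\prod_{k=n}^{1}\big(\prod_{j=1}^{k}x_{n-j+1}(\sigma_{d_{k+1,j+1}})\big)$ ($k$ decreasing, $j$ increasing). *)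

(* Defs.v *)
From HB Require Import structures.
From mathcomp Require Import all_boot all_order all_algebra all_fingroup.
From mathcomp Require Import complex.
From mathcomp Require Import Rstruct.
From Stdlib Require Import Reals.
Set Implicit Arguments. Unset Strict Implicit. Unset Printing Implicit Defensive.
Import GRing.Theory.
Local Open Scope ring_scope.

Definition C : numClosedFieldType := (Rdefinitions.R)[i].

(* Conventions: the paper's basis index p in {1..n+1} is the ordinal p-1 of 'I_n.+1. *)

Definition Emat (n p q : nat) : 'M[C]_n.+1 :=
  delta_mx (inord p.-1) (inord q.-1).

Definition xm (n i : nat) (s : C) : 'M[C]_n.+1 := 1 + s *: Emat n i i.+1.

Definition sdot (n i : nat) : 'M[C]_n.+1 :=
  xm n i 1 * (1 - Emat n i.+1 i) * xm n i 1.

Definition sperm (n i : nat) : 'S_n.+1 := tperm (inord i.-1) (inord i).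

Definition w0perm (n : nat) : 'S_n.+1 := perm (@rev_ord_inj n.+1).

Definition reduced_word_w0 (n : nat) (w : seq nat) : Prop :=
  [/\ all (fun i : nat => leq 1 i && leq i n) w,
      size w = 'C(n.+1, 2) &
      (\prod_(i <- w) sperm n i)%g = w0perm n].

Definition w0dot (n : nat) (w : seq nat) : 'M[C]_n.+1 := \prod_(i <- w) sdot n i.

(* The quiver: vertices v_{ij} are pairs (i,j); arrows c_{ij} : v_{i+1,j} -> v_{ij},
   d_{ij} : v_{ij} -> v_{i,j-1}. *)
Inductive arrow := c_arr of nat & nat | d_arr of nat & nat.

Definition head (a : arrow) : nat * nat :=
  match a with c_arr i j => (i, j) | d_arr i j => (i, j.-1) end.
Definition tail (a : arrow) : nat * nat :=
  match a with c_arr i j => (i.+1, j) | d_arr i j => (i, j) end.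

Definition xc (n : nat) (sigma : arrow -> C) : 'M[C]_n.+1 :=
  \prod_(1 <= k < n.+1) \prod_(j <- rev (index_iota k n.+1)) xm n j (sigma (c_arr j k)).

Definition xd (n : nat) (sigma : arrow -> C) : 'M[C]_n.+1 :=
  \prod_(k <- rev (index_iota 1 n.+1)) \prod_(1 <= j < k.+1)
     xm n (n - j + 1) (sigma (d_arr k.+1 j.+1)).

Definition bmat (n : nat) (w : seq nat) (t : nat * nat -> C) : 'M[C]_n.+1 :=
  xc n (fun a => t (head a) / t (tail a))
  * diag_mx (\row_(p < n.+1) t (p.+1, p.+1))
  * invmx (w0dot n w)
  * invmx (xd n (fun a => - (t (head a) / t (tail a)))).

(* <g . v^+_{omega_k}, v^+_{omega_k}> : coefficient of v_1 /\ ... /\ v_k in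
   g v_1 /\ ... /\ g v_k, i.e. the Leibniz expansion over the first k rows/columns. *)
Definition wedge_coef (n k : nat) (g : 'M[C]_n.+1) : C :=
  \sum_(s : 'S_k) (-1) ^+ s * \prod_(q < k) g (inord (s q)) (inord q).

(* Main.v *)
Require Import Defs.
From HB Require Import structures.
From mathcomp Require Import all_boot all_order all_algebra all_fingroup.
From mathcomp Require Import zify ring complex Rstruct.
Import GRing.Theory.
Local Open Scope ring_scope.
Set Implicit Arguments. Unset Strict Implicit. Unset Printing Implicit Defensive.

Section W.
Variable n : nat.
Implicit Types (i : nat).

Lemma Emat_mul i j k l : (j.-1 <= n)%N -> (k.-1 <= n)%N ->
  Emat n i j * Emat n k l = if j.-1 == k.-1 then Emat n i l else 0.
Proof.
move=> hj hk; rewrite /Emat.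
case: ifP => h.
  by rewrite (eqP h) [_ * _]mul_delta_mx.
rewrite [_ * _]mul_delta_mx_0 //.
apply/negP => /eqP /(congr1 val) /=; rewrite !inordK; [move=> e; by rewrite e eqxx in h| lia | lia].
Qed.
End W.

Lemma sdot_aux (ab p q r s : C) : ab - q + (r - p) + (r - s + (0 - r)) = ab + r - q - p - s.
Proof. ring. Qed.

Lemma sdotE n i : (1 <= i <= n)%N ->
  sdot n i = 1 + Emat n i i.+1 - Emat n i.+1 i - Emat n i i - Emat n i.+1 i.+1.
Proof.
move=> /andP[h1 h2].
rewrite /sdot /xm !scale1r.
have EE : Emat n i i.+1 * Emat n i i.+1 = 0.
  rewrite Emat_mul //=; last lia. case: ifP => //; lia.
have EF : Emat n i i.+1 * Emat n i.+1 i = Emat n i i.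
  rewrite Emat_mul ?eqxx //.
have FE : Emat n i.+1 i * Emat n i i.+1 = Emat n i.+1 i.+1.
  rewrite Emat_mul //=; try lia; by rewrite ?eqxx.
have EiE : Emat n i i * Emat n i i.+1 = Emat n i i.+1.
  rewrite Emat_mul //=; try lia; by rewrite ?eqxx.

rewrite !(mulrDl, mulrDr, mulrBl, mulrBr, mul1r, mulr1).
rewrite !(mulrN, mulNr) EF FE EE EiE.
set E := Emat n i i.+1; set F := Emat n i.+1 i.
set G := Emat n i i; set H := Emat n i.+1 i.+1.
apply/matrixP => a b; rewrite !mxE /=. exact: sdot_aux.
Qed.

Ltac cring := match goal with |- ?l = ?r => change (@eq C l r) end; ring.

Lemma pq_neq n i : (1 <= i <= n)%N -> (inord i.-1 : 'I_n.+1) != inord i.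
Proof.
move=> /andP[h1 h2]; apply/negP => /eqP /(congr1 val) /=.
rewrite !inordK; lia.
Qed.

Lemma sdot_entry n i a x : (1 <= i <= n)%N ->
  sdot n i a x = (a == sperm n i x)%:R * (if x == inord i.-1 then -1 else 1).
Proof.
move=> hi; have hpq := pq_neq hi.
rewrite sdotE // /Emat /sperm !mxE /=.
set p : 'I_n.+1 := inord i.-1; set q : 'I_n.+1 := inord i.
have hqp : q != p by rewrite eq_sym.
have F := (negbTE hpq, negbTE hqp).
case: (x =P p) => [->|/eqP hxp].
  rewrite tpermL.
  case: (eqVneq a q) => [e|haq]; first by rewrite ?e ?eqxx ?F /=; cring.
  case: (eqVneq a p) => [e|hap]; by rewrite ?e ?eqxx ?F ?(negbTE haq) ?(negbTE hap) /=; cring.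
case: (x =P q) => [->|/eqP hxq].
  rewrite tpermR.
  case: (eqVneq a q) => [e|haq]; first by rewrite ?e ?eqxx ?F /=; cring.
  case: (eqVneq a p) => [e|hap]; by rewrite ?e ?eqxx ?F ?(negbTE haq) ?(negbTE hap) /=; cring.
rewrite tpermD 1?eq_sym // ?(negbTE hxp) ?(negbTE hxq) !andbF /=; cring.
Qed.

Section Wf.
Variable n : nat.

Definition sig (w : seq nat) : 'S_n.+1 := ((\prod_(i <- w) sperm n i)^-1)%g.

Fixpoint up (w : seq nat) (b : 'I_n.+1) : nat :=
  match w with [::] => 0 | i :: w' => up w' b + (sig w' b == inord i.-1) end%N.
Fixpoint dn (w : seq nat) (b : 'I_n.+1) : nat :=
  match w with [::] => 0 | i :: w' => dn w' b + (sig w' b == inord i) end%N.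

Lemma sig_nil : sig [::] = 1%g.
Proof. by rewrite /sig big_nil invg1. Qed.

Lemma sig_cons i w b : sig (i :: w) b = sperm n i (sig w b).
Proof. by rewrite /sig big_cons invMg /sperm tpermV permM. Qed.

Lemma W_form w : all (fun i => 1 <= i <= n)%N w ->
  w0dot n w = \matrix_(a, b) ((a == sig w b)%:R * (-1) ^+ (up w b)).
Proof.
elim: w => [|i w IH] /=.
  move=> _; rewrite /w0dot big_nil; apply/matrixP => a b.
  by rewrite !mxE sig_nil perm1 expr0 mulr1 eq_sym.
move=> /andP[hi hw]; rewrite /w0dot big_cons -/(w0dot n w) IH //.
apply/matrixP => a b; rewrite !mxE.
rewrite (bigD1 (sig w b)) //=.
rewrite (eq_bigr (fun _ => 0)); last first.
  by move=> l /negPf hl; rewrite !mxE hl mul0r mulr0.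
rewrite big1_eq addr0.
rewrite sdot_entry // mxE eqxx mul1r sig_cons exprD.
case: (sig w b == inord i.-1); rewrite /= ?expr1 ?expr0; ring.
Qed.
End Wf.

Local Close Scope ring_scope.

Section Comb.
Variable n : nat.

Lemma vp i : (1 <= i <= n)%N -> ((inord i.-1 : 'I_n.+1) : nat) = i.-1.
Proof. move=> h; rewrite inordK //; lia. Qed.
Lemma vq i : (1 <= i <= n)%N -> ((inord i : 'I_n.+1) : nat) = i.
Proof. move=> h; rewrite inordK //; lia. Qed.

Lemma updn w b : all (fun i => 1 <= i <= n)%N w ->
  (sig n w b + dn w b = b + up w b)%N.
Proof.
elim: w => [|i w IH] /=; first by rewrite sig_nil perm1.
move=> /andP[hi hw]; rewrite sig_cons /sperm.
have := IH hw; have hp := vp hi; have hq := vq hi.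
case: (eqVneq (sig n w b) (inord i.-1)) => [->|hp'].
  rewrite tpermL hq (negbTE (pq_neq hi)) /=; lia.
case: (eqVneq (sig n w b) (inord i)) => [->|hq'].
  rewrite tpermR hp /=; lia.
rewrite tpermD 1?eq_sym //=; lia.
Qed.

Lemma sum_eq1 (s : 'S_n.+1) (c : 'I_n.+1) : (\sum_b (s b == c) = 1)%N.
Proof.
rewrite (bigD1 ((s^-1)%g c)) //= permKV eqxx big1 // => b hb.
apply/eqP; rewrite eqb0; apply: contra hb => /eqP <-; by rewrite permK.
Qed.

Lemma moves_sum w : (\sum_(b : 'I_n.+1) (up w b + dn w b) = 2 * size w)%N.
Proof.
elim: w => [|i w IH] /=; first by rewrite big1.
rewrite (eq_bigr (fun b => (up w b + dn w b) + ((sig n w b == inord i.-1) + (sig n w b == inord i)))%N); last by move=> b _; lia.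
rewrite big_split /= IH big_split /= !sum_eq1; lia.
Qed.
End Comb.
Local Open Scope ring_scope.


Local Close Scope ring_scope.

Section Inv.
Variable n : nat.

Definition invb (s : 'S_n.+1) (b : 'I_n.+1) :=
  #|[set c : 'I_n.+1 | (b < c)%N != (s b < s c)%N]|.

Lemma card_sel (s : 'S_n.+1) (x : bool) (q : 'I_n.+1) :
  (#|[set c | x && (s c == q)]| <= x)%N.
Proof.
case: x => /=; last by rewrite (_ : [set c | false] = set0) ?cards0 //; apply/setP => c; rewrite !inE.
rewrite (_ : [set c | s c == q] = [set (s^-1)%g q]) ?cards1 //.
apply/setP => c; rewrite !inE; apply/eqP/eqP => [<-|->]; by rewrite ?permK ?permKV.
Qed.

Lemma tperm_lt i (x y : 'I_n.+1) : (1 <= i <= n)%N ->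
  ~~ ((x == inord i.-1) && (y == inord i)) -> ~~ ((x == inord i) && (y == inord i.-1)) ->
  (sperm n i x < sperm n i y)%N = (x < y)%N.
Proof.
move=> hi h1 h2; have hp := vp hi; have hq := vq hi; rewrite /sperm.
set p : 'I_n.+1 := inord i.-1 in h1 h2 hp *; set q : 'I_n.+1 := inord i in h1 h2 hq *.
have hpq : p != q by exact: pq_neq.
case: (eqVneq x p) h1 h2 => [->|hxp] h1 h2.
  rewrite tpermL.
  case: (eqVneq y p) => [->|hyp]; first by rewrite tpermL !ltnn.
  case: (eqVneq y q) h1 => [->|hyq]; first by move=> /negP []; rewrite ?eqxx.
  move=> _; rewrite tpermD 1?eq_sym //.
  have : (y : nat) != p by apply: contra hyp => /eqP /val_inj ->.
  have : (y : nat) != q by apply: contra hyq => /eqP /val_inj ->.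
  rewrite hp hq; lia.
case: (eqVneq x q) h1 h2 => [->|hxq] h1 h2.
  rewrite tpermR.
  case: (eqVneq y q) => [->|hyq]; first by rewrite tpermR !ltnn.
  case: (eqVneq y p) h2 => [->|hyp]; first by move=> /negP []; rewrite ?eqxx.
  move=> _; rewrite tpermD 1?eq_sym //.
  have : (y : nat) != p by apply: contra hyp => /eqP /val_inj ->.
  have : (y : nat) != q by apply: contra hyq => /eqP /val_inj ->.
  rewrite hp hq; lia.
rewrite tpermD; [| by rewrite eq_sym | by rewrite eq_sym].
have : (x : nat) != p by apply: contra hxp => /eqP /val_inj ->.
have : (x : nat) != q by apply: contra hxq => /eqP /val_inj ->.
case: (eqVneq y p) => [->|hyp]; first by rewrite tpermL hp hq; lia.
case: (eqVneq y q) => [->|hyq]; first by rewrite tpermR hp hq; lia.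
by rewrite tpermD 1?eq_sym.
Qed.

Lemma inv_step (s : 'S_n.+1) i b : (1 <= i <= n)%N ->
  (invb (s * sperm n i)%g b <= invb s b + (s b == inord i.-1) + (s b == inord i))%N.
Proof.
move=> hi; rewrite /invb.
set S := [set c | _ != _ ].
set A := [set c : 'I_n.+1 | (b < c)%N != (s b < s c)%N].
set B1 := [set c | (s b == inord i.-1) && (s c == inord i)].
set B2 := [set c | (s b == inord i) && (s c == inord i.-1)].
have sub : S \subset A :|: B1 :|: B2.
  have key : forall c : 'I_n.+1, (b < c)%N != (sperm n i (s b) < sperm n i (s c))%N ->
    ((b < c)%N != (s b < s c)%N) || (s b == inord i.-1) && (s c == inord i)
    || (s b == inord i) && (s c == inord i.-1).
    move=> c.
    case: (boolP ((s b == inord i.-1) && (s c == inord i))) => [_|h1]; first by rewrite orbT.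
    case: (boolP ((s b == inord i) && (s c == inord i.-1))) => [_|h2]; first by rewrite orbT.
    by rewrite tperm_lt // orbF orbF.
  by apply/subsetP => c; rewrite !inE !permM; apply: key.
have h0 := subset_leq_card sub.
have h1 := card_sel s (s b == inord i.-1) (inord i).
have h2 := card_sel s (s b == inord i) (inord i.-1).
have h3 := leq_card_setU (A :|: B1) B2; have h4 := leq_card_setU A B1.
apply: leq_trans h0 _; apply: leq_trans h3 _.
apply: leq_trans (leq_add h4 (leqnn _)) _.
exact: (leq_add (leq_add (leqnn _) h1) h2).
Qed.

Lemma inv_le w b : all (fun i => 1 <= i <= n)%N w ->
  (invb (sig n w) b <= up w b + dn w b)%N.
Proof.
elim: w => [|i w IH] /=.
  move=> _; rewrite /invb sig_nil perm1 (_ : [set c | _] = set0) ?cards0 //.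
  by apply/setP => c; rewrite !inE ?perm1 ?eqxx.
move=> /andP[hi hw].
have -> : sig n (i :: w) = (sig n w * sperm n i)%g.
  by rewrite /sig big_cons invMg /sperm tpermV.
apply: leq_trans (inv_step _ _ hi) _.
have := IH hw; lia.
Qed.
End Inv.
Local Open Scope ring_scope.


Local Close Scope ring_scope.

Lemma bin2_mul m : ('C(m, 2) * 2 = m * m.-1)%N.
Proof.
elim: m => [|m IH] //. rewrite binS bin1 mulnDl IH. case: m {IH} => //= m. lia.
Qed.

Lemma sum_eq_le (T : finType) (f g : T -> nat) :
  (forall x, f x <= g x)%N -> (\sum_x g x = \sum_x f x)%N -> forall x, g x = f x.
Proof.
move=> le E x; apply/eqP; rewrite eqn_leq le andbT; apply/negP => lt.
have : (\sum_x f x < \sum_x g x)%N.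
  rewrite (bigD1 x) // [X in (_ < X)%N](bigD1 x) //=.
  rewrite -addSn; apply: leq_add; first by rewrite ltnNge; apply/negP.
  by apply: leq_sum => y _.
by rewrite E ltnn.
Qed.

Section Final.
Variable n : nat.

Lemma sig_w0 w b : reduced_word_w0 n w -> sig n w b = rev_ord b.
Proof.
case=> _ _ hw; rewrite /sig hw.
apply: (@perm_inj _ (w0perm n)); rewrite permKV /w0perm permE rev_ordK //.
Qed.

Lemma inv_w0 w b : reduced_word_w0 n w -> invb (sig n w) b = n.
Proof.
move=> hw; rewrite /invb (_ : [set c | _] = [set~ b]) ?cardsC1 ?card_ord //.
apply/setP => c; rewrite !inE !sig_w0 //=.
rewrite -(inj_eq val_inj) /=; have := ltn_ord b; have := ltn_ord c.
lia.
Qed.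

Lemma up_w0 w (b : 'I_n.+1) : reduced_word_w0 n w -> up w b = (n - b)%N.
Proof.
move=> hw; have [hall hsz _] := hw.
have le : forall b : 'I_n.+1, (n <= up w b + dn w b)%N.
  by move=> b'; rewrite -{1}(inv_w0 b' hw); exact: inv_le.
have E := @sum_eq_le _ (fun _ => n) (fun b => up w b + dn w b) le.
have E2 : (\sum_(b : 'I_n.+1) (up w b + dn w b) = \sum_(b : 'I_n.+1) n)%N.
  rewrite moves_sum hsz sum_nat_const card_ord mulnC bin2_mul /=; lia.
have := E E2 b; have := updn b hall; rewrite sig_w0 //=. have := ltn_ord b. lia.
Qed.
End Final.
Local Open Scope ring_scope.


Definition ut m (X : 'M[C]_m) :=
  (forall i j : 'I_m, (j < i)%N -> X i j = 0) /\ (forall i, X i i = 1).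

Lemma ut_mul m (X Y : 'M[C]_m) : ut X -> ut Y -> ut (X *m Y).
Proof.
move=> [X0 X1] [Y0 Y1]; split.
  move=> i j hij; rewrite !mxE big1 // => l _.
  case: (ltnP l i) => hl; first by rewrite X0 ?mul0r.
  rewrite Y0 ?mulr0 //; exact: leq_trans hij hl.
move=> i; rewrite !mxE (bigD1 i) //= X1 Y1 mul1r big1 ?addr0 // => l hl.
case: (ltngtP l i) => hh; first by rewrite X0 ?mul0r.
  by rewrite Y0 ?mulr0.
by move: hl; rewrite (val_inj hh) eqxx.
Qed.

Lemma ut1 m : ut (1%:M : 'M[C]_m).
Proof.
split; first by move=> i j hij; rewrite !mxE; case: eqVneq => // e; move: hij; rewrite e ltnn.
by move=> i; rewrite !mxE eqxx.
Qed.

Lemma ut_det m (X : 'M[C]_m) : ut X -> \det X = 1.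
Proof.
move=> [X0 X1]; rewrite -det_tr det_trig.
  by rewrite big1 // => i _; rewrite mxE X1.
by apply/is_trig_mxP => i j hij; rewrite mxE X0.
Qed.

Lemma ut_unit m (X : 'M[C]_m) : ut X -> X \in unitmx.
Proof. by move=> h; rewrite unitmxE ut_det // unitr1. Qed.

Definition sub m k (A : 'M[C]_m.+1) : 'M[C]_k := \matrix_(i, j) A (inord i) (inord j).

Lemma sum_trunc m k (F : 'I_m.+1 -> C) : (k <= m.+1)%N ->
  (forall l : 'I_m.+1, (k <= l)%N -> F l = 0) ->
  \sum_l F l = \sum_(l < k) F (inord l).
Proof.
move=> hk hF.
rewrite (eq_bigr (fun l : 'I_m.+1 => F (inord l))); last by move=> l _; rewrite inord_val.
rewrite [RHS](big_ord_widen _ (fun l => F (inord l)) hk).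
rewrite (bigID (fun l : 'I_m.+1 => (l < k)%N)) /= [X in _ + X]big1 ?addr0 // => l.
by rewrite -leqNgt => hl; rewrite inord_val hF.
Qed.

Lemma sub_mul m k (A X : 'M[C]_m.+1) : (k <= m.+1)%N ->
  (forall i j : 'I_m.+1, (j < i)%N -> X i j = 0) ->
  sub k (A *m X) = sub k A *m sub k X.
Proof.
move=> hk X0; apply/matrixP => i j; rewrite !mxE.
rewrite (@sum_trunc m k (fun l => A (inord i) l * X l (inord j)) hk).
  by apply: eq_bigr => l _; rewrite !mxE.
move=> l hl; rewrite X0 ?mulr0 // inordK; last by have := ltn_ord j; lia.
by have := ltn_ord j; lia.
Qed.

Lemma sub_ut m k (X : 'M[C]_m.+1) : (k <= m.+1)%N -> ut X -> ut (sub k X).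
Proof.
move=> hk [X0 X1]; split.
  by move=> i j hij; rewrite mxE X0 // !inordK //; have := ltn_ord i; have := ltn_ord j; lia.
by move=> i; rewrite mxE X1.
Qed.

Lemma minor_ut m k (B X : 'M[C]_m.+1) : (k <= m.+1)%N -> ut X ->
  \det (sub k (B *m invmx X)) = \det (sub k B).
Proof.
move=> hk hX.
have -> : sub k B = sub k ((B *m invmx X) *m X).
  by rewrite mulmxKV //; apply: ut_unit.
rewrite (@sub_mul m k (B *m invmx X) X) //; last by case: hX.
by rewrite det_mulmx (@ut_det k (sub k X)) ?mulr1 //; apply: sub_ut.
Qed.

Lemma wedge_sub n k (g : 'M[C]_n.+1) : wedge_coef k g = \det (sub k g).
Proof.
rewrite -det_tr /wedge_coef /determinant; apply: eq_bigr => s _.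
by congr (_ * _); apply: eq_bigr => q _; rewrite !mxE.
Qed.

Lemma xm_entry n j s (a b : 'I_n.+1) :
  xm n j s a b = (a == b)%:R + s * ((a == inord j.-1) && (b == inord j))%:R.
Proof. by rewrite /xm /Emat !mxE. Qed.

Lemma ut_xm n j s : (1 <= j <= n)%N -> ut (xm n j s).
Proof.
move=> hj; split.
  move=> a b hab; rewrite xm_entry.
  have -> : (a == b) = false by apply/negP => /eqP e; move: hab; rewrite e ltnn.
  have -> : ((a == inord j.-1) && (b == inord j)) = false.
    apply/negP => /andP[/eqP ea /eqP eb]; move: hab; rewrite ea eb !inordK; lia.
  by rewrite mulr0 addr0.
move=> a; rewrite xm_entry eqxx.
have -> : ((a == inord j.-1) && (a == inord j)) = false.
  apply/negP => /andP[/eqP ea /eqP eb].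
  by move: (pq_neq hj); rewrite -ea -eb eqxx.
by rewrite mulr0 addr0.
Qed.

Lemma ut_xd n sg : ut (xd n sg).
Proof.
rewrite /xd big_seq; apply: (big_ind (@ut n.+1)); first exact: ut1.
  by move=> x y hx hy; exact: ut_mul.
move=> k; rewrite mem_rev mem_index_iota => hk.
rewrite big_nat_cond; apply: (big_ind (@ut n.+1)); first exact: ut1.
  by move=> x y hx hy; exact: ut_mul.
move=> j /andP[hj _]; apply: ut_xm; lia.
Qed.

Definition Jk k : 'M[C]_k := \matrix_(j, p) ((j == rev_ord p)%:R * (-1) ^+ p).

Lemma det_Jk k : \det (Jk k) = 1.
Proof.
elim: k => [|k IH]; first by rewrite det_mx00.
rewrite (expand_det_row _ ord_max) (bigD1 ord0) //= big1 ?addr0; last first.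
  move=> p hp; rewrite !mxE.
  have -> : (ord_max == rev_ord p) = false.
    apply/negP => /eqP /(congr1 val) /=; move: hp; rewrite -(inj_eq val_inj) /= => /eqP hp e; have := ltn_ord p; lia.
  by rewrite mul0r mul0r.
rewrite !mxE /cofactor.
have -> : (ord_max == rev_ord (ord0 : 'I_k.+1)) by apply/eqP/val_inj => /=; lia.
have -> : row' ord_max (col' ord0 (Jk k.+1)) = - Jk k.
  apply/matrixP => i j; rewrite !mxE /=.
  have -> : (lift ord_max i == rev_ord (lift ord0 j)) = (i == rev_ord j).
    rewrite -!(inj_eq val_inj) /= /bump /=. have := ltn_ord i; have := ltn_ord j.
    case: (leqP k i) => // *; lia.
  by rewrite /bump /= exprS; ring.

rewrite -[- Jk k]scaleN1r detZ IH /= expr0 mul1r mulr1 addn0 -exprD.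
by rewrite mul1r -signr_odd oddD addbb.
Qed.

Lemma w0dot_form n w : reduced_word_w0 n w ->
  w0dot n w = \matrix_(a, b) ((a == rev_ord b)%:R * (-1) ^+ (n - b)).
Proof.
move=> hw; have [hall _ _] := hw; rewrite W_form //.
by apply/matrixP => a b; rewrite !mxE sig_w0 // up_w0.
Qed.

Lemma w0dot_inv n w : reduced_word_w0 n w ->
  invmx (w0dot n w) = \matrix_(a, p) ((a == rev_ord p)%:R * (-1) ^+ (p : nat)).
Proof.
move=> hw; set V := \matrix_(a, p) _.
have WV : w0dot n w *m V = 1%:M.
  rewrite w0dot_form //; apply/matrixP => a b; rewrite !mxE.
  rewrite (bigD1 (rev_ord b)) //= big1 ?addr0; last first.
    by move=> l hl; rewrite !mxE (negbTE hl) mul0r mulr0.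
  rewrite !mxE eqxx rev_ordK /= mul1r.
  have -> : (n - (n.+1 - b.+1))%N = b by have := ltn_ord b; lia.
  by rewrite -mulrA -exprD -signr_odd oddD addbb mulr1.
have [hu _] := mulmx1_unit WV.
by rewrite -[RHS](mulKmx hu V) WV mulmx1.
Qed.

Section Y.
Variable n : nat.

Lemma prod_xm (s : seq nat) (f : nat -> C) :
  sorted gtn s -> all (fun j => 1 <= j <= n)%N s ->
  \prod_(j <- s) xm n j (f j) = 1 + \sum_(j <- s) f j *: Emat n j j.+1.
Proof.
elim: s => [|j s IH] /=; first by rewrite big_nil big_nil addr0.
move=> hs /andP[hj hall].
have hs' : sorted gtn s by move: hs; rewrite path_sortedE => [/andP[]|] // ? ? ? /= ? ?; lia.
have hlt : all (gtn j) s by move: hs; rewrite path_sortedE => [/andP[]|] // ? ? ? /= ? ?; lia.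
have Z : f j *: Emat n j j.+1 * \sum_(l <- s) f l *: Emat n l l.+1 = 0.
  rewrite big_distrr big1_seq //= => l hl.
  have hl1 := allP hall l hl; have hl2 : (l < j)%N := allP hlt l hl.
  rewrite -scalerAl -scalerAr Emat_mul /=; try lia.
  by case: ifP => [/eqP|]; [lia | rewrite !scaler0].
rewrite !big_cons IH // /xm mulrDl mul1r mulrDr mulr1 Z addr0.
by rewrite -addrA [f j *: _ + _]addrC.
Qed.
End Y.

Section Y2.
Variable n : nat.
Variable t : nat * nat -> C.

Definition Y m : 'M[C]_n.+1 :=
  \prod_(j <- rev (index_iota m n.+1)) xm n j (t (j, m) / t (j.+1, m)).

Lemma Y_entry m (l c : 'I_n.+1) : (1 <= m)%N ->
  Y m l c = (l == c)%:R + ((c == l.+1 :> nat) && (m <= c)%N)%:R * (t (c : nat, m) / t (c.+1, m)).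
Proof.
move=> hm; rewrite /Y prod_xm; first last.
- apply/allP => j; rewrite mem_rev mem_index_iota; lia.
- rewrite rev_sorted; exact: iota_ltn_sorted.
rewrite !mxE summxE big_rev; congr (_ + _).
rewrite (eq_bigr (fun j => t (j, m) / t (j.+1, m) * ((l == inord j.-1) && (c == inord j))%:R)); last first.
  by move=> j _; rewrite !mxE.
case: (boolP ((c == l.+1 :> nat) && (m <= c))%N) => [/andP[/eqP hc hmc]|hB].
  rewrite (bigD1_seq (c : nat)) /=; first last.
  - exact: iota_uniq.
  - rewrite mem_index_iota; have := ltn_ord c; lia.
  rewrite big1_seq ?addr0; last first.
    move=> j /andP[hjc hj]; rewrite mem_index_iota in hj.
    have -> : (c == inord j) = false.
      apply/negP => /eqP /(congr1 val) /=. rewrite inordK; last lia.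
      by move=> e; move: hjc; rewrite e eqxx.
    by rewrite andbF mulr0.
  have -> : (l == inord c.-1) by apply/eqP/val_inj => /=; rewrite inordK; have := ltn_ord c; lia.
  by rewrite inord_val eqxx mulr1 mul1r.
rewrite big1_seq ?mul0r // => j /andP[_ hj]; rewrite mem_index_iota in hj.
case: (boolP ((l == inord j.-1) && (c == inord j))) => [/andP[/eqP el /eqP ec]|]; last by rewrite mulr0.
move: hB; rewrite el ec !inordK; lia.
Qed.
End Y2.

Section P.
Variable n : nat.
Variable t : nat * nat -> C.

Lemma sum_d (k : nat) (F : 'I_k -> C) (x : 'I_k) :
  \sum_(r < k) F r * (r == x)%:R = F x.
Proof.
rewrite (bigD1 x) //= eqxx mulr1 big1 ?addr0 // => r hr; by rewrite (negbTE hr) mulr0.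
Qed.

Lemma mulY_entry (A : 'M[C]_n.+1) m i (c : 'I_n.+1) : (1 <= m)%N ->
  (A *m Y n t m) i c = A i c +
   (if (0 < c)%N && (m <= c)%N then A i (inord c.-1) * (t (c : nat, m) / t (c.+1, m)) else 0).
Proof.
move=> hm; rewrite mxE.
rewrite (eq_bigr (fun l => A i l * (l == c)%:R + A i l * (((c == l.+1 :> nat) && (m <= c)%N)%:R * (t (c : nat, m) / t (c.+1, m))))); last first.
  by move=> l _; rewrite Y_entry // mulrDr.
rewrite big_split /= sum_d; congr (_ + _).
case: ifP => [/andP[hc hmc]|hB].
  rewrite (bigD1 (inord c.-1)) //= big1 ?addr0.
    rewrite inordK; last by have := ltn_ord c; lia.
    have -> : (c == c.-1.+1 :> nat) by apply/eqP; lia.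
    by rewrite hmc mul1r.
  move=> l hl; have -> : (c == l.+1 :> nat) = false; last by rewrite mul0r mulr0.
  apply/negP => /eqP e; move: hl; have -> : l = inord c.-1; last by rewrite eqxx.
  by apply/val_inj; rewrite /= inordK; have := ltn_ord c; lia.
rewrite big1 // => l _.
have -> : ((c == l.+1 :> nat) && (m <= c)%N) = false; last by rewrite mul0r mulr0.
by apply/negP => /andP[/eqP e hmc]; move: hB; rewrite hmc e.
Qed.

Definition P m : 'M[C]_n.+1 := \prod_(1 <= m' < m.+1) Y n t m'.

Lemma P_S m : P m.+1 = P m *m Y n t m.+1.
Proof. by rewrite /P big_nat_recr. Qed.

Lemma P_supp m (i c : 'I_n.+1) : (i + m < c)%N -> P m i c = 0.
Proof.
elim: m i c => [|m IH] i c h.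
  rewrite /P big_geq // mxE; case: eqVneq => // e; move: h; rewrite e; lia.
rewrite P_S mulY_entry // IH; last lia.
case: ifP => [/andP[hc _]|_]; last by rewrite addr0.
rewrite IH ?mul0r ?addr0 //.
rewrite inordK; have := ltn_ord c; lia.
Qed.
End P.

Lemma sum_dn (k : nat) (F : 'I_k -> C) (y : 'I_k) (x : nat) : (y : nat) = x ->
  \sum_(r < k) F r * (r == x :> nat)%:R = F y.
Proof.
move=> <-; rewrite (bigD1 y) //= eqxx mulr1 big1 ?addr0 // => r hr.
by rewrite (inj_eq val_inj) (negbTE hr) mulr0.
Qed.

Lemma sum_dn0 (k : nat) (F : 'I_k -> C) (x : nat) : (k <= x)%N ->
  \sum_(r < k) F r * (r == x :> nat)%:R = 0.
Proof.
move=> hx; rewrite big1 // => r _; have -> : (r == x :> nat) = false; last by rewrite mulr0.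
apply/negP => /eqP e; have := ltn_ord r; lia.
Qed.

Lemma tele (f : nat -> C) k : (forall j, (j <= k)%N -> f j != 0) ->
  \prod_(j < k) (f j / f j.+1) = f 0%N / f k.
Proof.
elim: k => [|k IH] h; first by rewrite big_ord0 divff // h.
rewrite big_ord_recr /= IH; last by move=> j hj; apply: h; lia.
by rewrite mulrA divfK // h.
Qed.

Section Ph.
Variable n : nat.
Variable t : nat * nat -> C.
Hypothesis tnz : forall i j : nat, (1 <= j <= i)%N -> (i <= n.+1)%N -> t (i, j) != 0.

Definition win k o (A : 'M[C]_n.+1) : 'M[C]_k := \matrix_(i, j) A (inord i) (inord (o + j)).

Lemma phase1 k m : (m + k <= n.+1)%N ->
  \det (win k m (P n t m)) = \prod_(1 <= m' < m.+1) (t (m', m') / t (m' + k, m')).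
Proof.
elim: m => [|m IH] hmk.
  rewrite big_geq // (_ : win k 0 (P n t 0) = 1%:M) ?det1 //.
  apply/matrixP => i j; rewrite /P big_geq // !mxE add0n.
  congr ((_ : bool)%:R); apply/eqP/eqP => [/(congr1 val)|->//].
  rewrite /= !inordK; [exact: val_inj | |]; have := ltn_ord i; have := ltn_ord j; lia.
set B : 'M[C]_k := \matrix_(r, j) ((r == j)%:R * (t (m.+1 + j, m.+1) / t ((m.+1 + j).+1, m.+1))
                                   + (r == j.+1 :> nat)%:R).
have E : win k m.+1 (P n t m.+1) = win k m (P n t m) *m B.
  apply/matrixP => i j; rewrite !mxE P_S mulY_entry // inordK; last by have := ltn_ord j; lia.
  have -> : ((0 < m.+1 + j)%N && (m.+1 <= m.+1 + j)%N) by apply/andP; lia.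
  rewrite (eq_bigr (fun r => (win k m (P n t m) i r) * (r == j)%:R * (t (m.+1 + j, m.+1) / t ((m.+1 + j).+1, m.+1)) + (win k m (P n t m) i r) * (r == j.+1 :> nat)%:R)); last first.
    by move=> r _; rewrite !mxE mulrDr mulrA.
  rewrite big_split /= -big_distrl /= sum_d [in RHS]addrC.
  have e1 : (inord (m.+1 + j).-1 : 'I_n.+1) = inord (m + j) by congr inord; lia.
  rewrite [win _ _ _ i j]mxE.
  case: (ltnP j.+1 k) => hj.
    rewrite (@sum_dn k (fun r => win k m (P n t m) i r) (Ordinal hj) j.+1 erefl) !mxE /=.
    by rewrite addnS addSn.
  rewrite sum_dn0 // add0r (@P_supp n t m (inord i) (inord (m.+1 + j))) ?add0r //.
  rewrite !inordK; have := ltn_ord i; have := ltn_ord j; lia.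
rewrite E det_mulmx IH; last lia.
rewrite [RHS]big_nat_recr //=; congr (_ * _).
rewrite det_trig; last first.
  apply/is_trig_mxP => r j hrj; rewrite mxE.
  have -> : (r == j) = false by apply/negP => /eqP e; move: hrj; rewrite e ltnn.
  have -> : (r == j.+1 :> nat) = false by apply/negP => /eqP e; move: hrj; rewrite e; lia.
  by rewrite mul0r addr0.
rewrite (eq_bigr (fun j : 'I_k => (fun x => t (m.+1 + x, m.+1)) j / (fun x => t (m.+1 + x, m.+1)) j.+1)); last first.
  move=> j _; rewrite mxE eqxx mul1r.
  have -> : (j == j.+1 :> nat) = false by apply/negP => /eqP; lia.
  rewrite /= addr0; congr (_ / t (_, _)); lia.
rewrite (@tele (fun x => t (m.+1 + x, m.+1)) k); first by congr (t (_, _) / _); lia.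
move=> j hj; apply: tnz; lia.
Qed.

Lemma phase2 k m : (k <= n.+1)%N -> (n.+1 - k <= m <= n)%N ->
  \det (win k (n.+1 - k) (P n t m)) = \det (win k (n.+1 - k) (P n t (n.+1 - k))).
Proof.
move=> hk; set o := (n.+1 - k)%N. have ho : o = (n.+1 - k)%N := erefl.
elim: m => [|m IH] hm.
  by have -> : o = 0%N by lia.
case: (eqVneq o m.+1) => [-> //|ne].
rewrite -IH; last lia.
set B : 'M[C]_k := \matrix_(r, j) ((r == j)%:R + (r.+1 == j :> nat)%:R *
   (if (m.+1 <= o + j)%N then t ((o + j)%N, m.+1) / t ((o + j).+1, m.+1) else 0)).
have E : win k o (P n t m.+1) = win k o (P n t m) *m B.
  apply/matrixP => i j; rewrite !mxE P_S mulY_entry // inordK; last by have := ltn_ord j; lia.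
  rewrite (eq_bigr (fun r => (win k o (P n t m) i r) * (r == j)%:R + (win k o (P n t m) i r) * (r.+1 == j :> nat)%:R *
   (if (m.+1 <= o + j)%N then t ((o + j)%N, m.+1) / t ((o + j).+1, m.+1) else 0))); last first.
    by move=> r _; rewrite !mxE mulrDr mulrA.
  rewrite big_split /= -big_distrl /= sum_d [win _ _ _ i j]mxE; congr (_ + _).
  case: (posnP j) => hj.
    have -> : (m.+1 <= o + j)%N = false by lia.
    by rewrite andbF mulr0.
  have hj' : (j.-1 < k)%N by have := ltn_ord j; lia.
  rewrite (eq_bigr (fun r => win k o (P n t m) i r * (r == j.-1 :> nat)%:R)); last first.
    move=> r _; congr (_ * (_ : bool)%:R); apply/eqP/eqP; lia.
  rewrite (@sum_dn k (fun r => win k o (P n t m) i r) (Ordinal hj') j.-1 erefl) !mxE /=.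
  have -> : (0 < o + j)%N by lia.
  rewrite /=; case: ifP => _; last by rewrite mulr0.
  by congr (P n t m _ (inord _) * _); lia.
rewrite E det_mulmx (@ut_det k B) ?mulr1 //; split.
  move=> r j hrj; rewrite mxE.
  have -> : (r == j) = false by apply/negP => /eqP e; move: hrj; rewrite e ltnn.
  have -> : (r.+1 == j :> nat) = false by apply/negP => /eqP e; lia.
  by rewrite mul0r addr0.
move=> r; rewrite mxE eqxx.
have -> : (r.+1 == r :> nat) = false by apply/negP => /eqP; lia.
by rewrite mul0r addr0.
Qed.

Lemma xc_det k : (1 <= k <= n)%N ->
  \det (win k (n.+1 - k) (xc n (fun a => t (Defs.head a) / t (Defs.tail a)))) =
  \prod_(1 <= m' < (n.+1 - k).+1) (t (m', m') / t (m' + k, m')).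
Proof.
move=> hk; have -> : xc n (fun a => t (Defs.head a) / t (Defs.tail a)) = P n t n by [].
rewrite phase2; [|lia|lia].
rewrite phase1 //; lia.
Qed.
End Ph.

Unset Implicit Arguments.
Set Strict Implicit.

Theorem lemma9p3 (n : nat) (w : seq nat) (t : nat * nat -> C) :
  reduced_word_w0 n w ->
  (forall i j : nat, (1 <= j <= i)%N -> (i <= n.+1)%N -> t (i, j) != 0) ->
  forall k : nat, (1 <= k <= n)%N ->
    wedge_coef k (bmat n w t)
    = (\prod_(1 <= i < n.+2) t (i, i)) * \prod_(1 <= j < n.+2 - k) (t (j + k, j))^-1.
Proof.
move=> hw tnz k hk.
rewrite wedge_sub /bmat -!mulmxE.
rewrite minor_ut; last exact: ut_xd. 2: lia.
rewrite w0dot_inv // -mulmxA.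
set XC := xc n _.
set dk : 'rV[C]_k := \row_(p < k) t ((n - p).+1, (n - p).+1).
have E : sub k (XC *m (diag_mx (\row_(p < n.+1) t (p.+1, p.+1)) *m
          \matrix_(a, p) ((a == rev_ord p)%:R * (-1) ^+ (p : nat))))
        = win k (n.+1 - k) XC *m (Jk k *m diag_mx dk).
  apply/matrixP => i p; rewrite mul_diag_mx mul_mx_diag !mxE.
  rewrite (bigD1 (rev_ord (inord p))) //= big1 ?addr0; last first.
    by move=> r hr; rewrite !mxE (negbTE hr) mul0r mulr0 mulr0.
  rewrite (bigD1 (rev_ord p)) //= big1 ?addr0; last first.
    by move=> r hr; rewrite !mxE (negbTE hr) mul0r mul0r mulr0.
  rewrite !mxE !eqxx !mul1r.
  have hp := ltn_ord p.
  have e1 : (rev_ord (inord p) : 'I_n.+1) = inord (n.+1 - k + rev_ord p).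
    apply/val_inj; rewrite /= !inordK; lia.
  rewrite -e1 /= inordK; last lia.
  have -> : (n.+1 - p.+1 = n - p)%N by lia.
  by congr (_ * _); rewrite mulrC.
rewrite E !det_mulmx det_Jk mul1r det_diag xc_det //.
have -> : (n.+2 - k = (n.+1 - k).+1)%N by lia.
rewrite big_split /= -mulrA [X in _ = X * _](big_cat_nat _ (n := (n.+1 - k).+1)) /=; try lia.
rewrite -!mulrA; congr (_ * _); rewrite mulrC; congr (_ * _).
rewrite big_rev_mkord (_ : (n.+2 - (n.+1 - k).+1 = k)%N); last lia.
apply: eq_bigr => p _; rewrite !mxE; have hp := ltn_ord p; congr (t (_, _)); lia.
Qed.
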